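(* There exist a Hopf algebra ${\cal B}$ and a right ${\cal B}$-comodule algebra $({\cal E},\rho)$ such that: (1) the algebra of coinvariants ${\cal E}^{{\rm co}{\cal B}}$ is commutative (and can be chosen to be the polynomial ring ${\bf k}[u]$); (2) ${\cal E}$ is isomorphic to a smash product ${\cal E}^{{\rm co}{\cal B}}\sharp{\cal B}$ with coaction ${\rm id}\otimes\Delta$; (3) there is a multiplicative set $U\subset{\cal E}^{{\rm co}{\cal B}}$ such that there is no pair consisting of a $\rho$-compatible left Ore set $S\subset{\cal E}$ and an algebra isomorphism $\zeta:(S^{-1}{\cal E})^{{\rm co}{\cal B}}\to U^{-1}({\cal E}^{{\rm co}{\cal B}})$ with $\zeta\circ i_S|_{{\cal E}^{{\rm co}{\cal B}}}=i_U$.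
   Context: A right ${\cal B}$-comodule algebra is an associative unital algebra with a right ${\cal B}$-coaction that is an algebra map. A left Ore set $S$ in ${\cal E}$ is $\rho$-compatible if there is a unique map $\rho_S$ making $S^{-1}{\cal E}$ a right ${\cal B}$-comodule algebra with $\rho_S\circ i_S=(i_S\otimes{\rm id})\circ\rho$, and $(S^{-1}{\cal E})^{{\rm co}{\cal B}}$ denotes the coinvariants of $\rho_S$. Smash product $V\sharp{\cal B}$: $V\otimes{\cal B}$ with product $(v\otimes b)(v'\otimes b')=\sum v(b_{(1)}\rhd v')\otimes b_{(2)}b'$ for a ${\cal B}$-module algebra action $\rhd$ on $V$. *)

(* Defs.v *)
(* Hopf algebras, comodule algebras, smash products and
   Ore localizations over a field k, with tensor products V (x) W of
   k-vector spaces represented setoid-style: a tensor is a finite formal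
   sum [seq (v_i, w_i)] of pure tensors, and two such sums are EQUAL in
   V (x) W iff every bilinear map out of V x W (into any k-module M)
   takes the same value on them (this is exactly the kernel of the
   canonical surjection onto the tensor product, by its universal
   property).  A linear map X -> V (x) W is given by choosing a
   representative for every image (Sweedler notation). *)
From HB Require Import structures.
From mathcomp Require Import all_boot all_order all_algebra.
Set Implicit Arguments. Unset Strict Implicit. Unset Printing Implicit Defensive.
Import GRing.Theory.
Local Open Scope ring_scope.

Section Tensors.
Variable k : fieldType.

Definition bilin (V W M : lmodType k) (f : V -> W -> M) : Prop :=
  (forall (a : k) v1 v2 w, f (a *: v1 + v2) w = a *: f v1 w + f v2 w) /\
  (forall (a : k) v w1 w2, f v (a *: w1 + w2) = a *: f v w1 + f v w2).

Definition trilin (U V W M : lmodType k) (f : U -> V -> W -> M) : Prop :=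
  [/\ (forall (a : k) u1 u2 v w, f (a *: u1 + u2) v w = a *: f u1 v w + f u2 v w),
      (forall (a : k) u v1 v2 w, f u (a *: v1 + v2) w = a *: f u v1 w + f u v2 w) &
      (forall (a : k) u v w1 w2, f u v (a *: w1 + w2) = a *: f u v w1 + f u v w2)].

Definition teq2 (V W : lmodType k) (s t : seq (V * W)) : Prop :=
  forall (M : lmodType k) (f : V -> W -> M), bilin f ->
    \sum_(p <- s) f p.1 p.2 = \sum_(p <- t) f p.1 p.2.

Definition teq3 (U V W : lmodType k) (s t : seq (U * V * W)) : Prop :=
  forall (M : lmodType k) (f : U -> V -> W -> M), trilin f ->
    \sum_(p <- s) f p.1.1 p.1.2 p.2 = \sum_(p <- t) f p.1.1 p.1.2 p.2.

Definition tscale (V W : lmodType k) (a : k) (s : seq (V * W)) : seq (V * W) :=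
  [seq (a *: p.1, p.2) | p <- s].

Section Hopf.
Variable B : algType k.
Variables (D : B -> seq (B * B)) (eps : B -> k) (S : B -> B).

Definition Delta_algmap : Prop :=
  [/\ (forall (a : k) x y, teq2 (D (a *: x + y)) (tscale a (D x) ++ D y)),
      (forall x y, teq2 (D (x * y)) [seq (p.1 * q.1, p.2 * q.2) | p <- D x, q <- D y]) &
      teq2 (D 1) [:: (1, 1)]].

Definition coassociative : Prop :=
  forall x, teq3 [seq (q.1, q.2, p.2) | p <- D x, q <- D p.1]
                 [seq (p.1, q.1, q.2) | p <- D x, q <- D p.2].

Definition eps_algmap : Prop :=
  [/\ (forall (a : k) x y, eps (a *: x + y) = a * eps x + eps y),
      (forall x y, eps (x * y) = eps x * eps y) & eps 1 = 1].

Definition counital : Prop :=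
  forall x, \sum_(p <- D x) eps p.1 *: p.2 = x /\ \sum_(p <- D x) eps p.2 *: p.1 = x.

Definition antipode_ax : Prop :=
  (forall (a : k) x y, S (a *: x + y) = a *: S x + S y) /\
  (forall x, \sum_(p <- D x) S p.1 * p.2 = (eps x)%:A /\
             \sum_(p <- D x) p.1 * S p.2 = (eps x)%:A).

Definition is_hopf : Prop :=
  [/\ Delta_algmap, coassociative, eps_algmap, counital & antipode_ax].
End Hopf.

Section Comod.
Variables (B : algType k) (D : B -> seq (B * B)) (eps : B -> k).
Variables (E : algType k) (rho : E -> seq (E * B)).

Definition is_comod_alg : Prop :=
  [/\ (forall (a : k) x y, teq2 (rho (a *: x + y)) (tscale a (rho x) ++ rho y)),
      (forall x y, teq2 (rho (x * y)) [seq (p.1 * q.1, p.2 * q.2) | p <- rho x, q <- rho y]),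
      teq2 (rho 1) [:: (1, 1)],
      (forall e, teq3 [seq (q.1, q.2, p.2) | p <- rho e, q <- rho p.1]
                      [seq (p.1, q.1, q.2) | p <- rho e, q <- D p.2]) &
      (forall e, \sum_(p <- rho e) eps p.2 *: p.1 = e)].

Definition coinv (e : E) : Prop := teq2 (rho e) [:: (e, 1)].
End Comod.

Definition commutative_on (E : algType k) (V : E -> Prop) : Prop :=
  forall x y, V x -> V y -> x * y = y * x.

Definition poly_iso (E : algType k) (V : E -> Prop) : Prop :=
  exists psi : {poly k} -> E,
    [/\ (forall (a : k) p q, psi (a *: p + q) = a *: psi p + psi q),
        (forall p q, psi (p * q) = psi p * psi q), psi 1 = 1,
        injective psi & (forall e, V e <-> exists p, e = psi p)].

Definition alg_iso_on (L : algType k) (A : algType k) (V : L -> Prop) (zeta : L -> A) : Prop :=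
  [/\ (forall (a : k) x y, V x -> V y -> zeta (a *: x + y) = a *: zeta x + zeta y),
      (forall x y, V x -> V y -> zeta (x * y) = zeta x * zeta y), zeta 1 = 1,
      (forall x y, V x -> V y -> zeta x = zeta y -> x = y) &
      (forall z, exists x, V x /\ zeta x = z)].

Section Smash.
Variables (B : algType k) (D : B -> seq (B * B)) (eps : B -> k).
Variables (E : algType k) (V : E -> Prop).

Definition module_alg (act : B -> E -> E) : Prop :=
  [/\ (forall b v, V v -> V (act b v)),
      (forall (a : k) b1 b2 v, V v -> act (a *: b1 + b2) v = a *: act b1 v + act b2 v),
      (forall (a : k) b v1 v2, V v1 -> V v2 -> act b (a *: v1 + v2) = a *: act b v1 + act b v2),
      (forall b c v, V v -> act (b * c) v = act b (act c v)) &
      [/\ (forall v, V v -> act 1 v = v),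
          (forall b v w, V v -> V w -> act b (v * w) = \sum_(p <- D b) act p.1 v * act p.2 w) &
          (forall b, act b 1 = (eps b)%:A)]].

(* phi : V (x) B -> E (given by its bilinear values on pure tensors) is an
   isomorphism of k-algebras from the smash product V # B onto E, which
   intertwines the coaction id (x) Delta of V # B with rho. *)
Definition smash_iso (rho : E -> seq (E * B)) (act : B -> E -> E) (phi : E -> B -> E) : Prop :=
  [/\
      (forall (a : k) v1 v2 b, V v1 -> V v2 -> phi (a *: v1 + v2) b = a *: phi v1 b + phi v2 b)
      /\ (forall (a : k) v b1 b2, V v -> phi v (a *: b1 + b2) = a *: phi v b1 + phi v b2),
      (forall e, exists s : seq (E * B), (forall p, p \in s -> V p.1) /\
                   e = \sum_(p <- s) phi p.1 p.2),
      (forall s t : seq (E * B), (forall p, p \in s -> V p.1) -> (forall p, p \in t -> V p.1) ->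
          \sum_(p <- s) phi p.1 p.2 = \sum_(p <- t) phi p.1 p.2 -> teq2 s t),
      (forall v b v' b', V v -> V v' ->
          phi v b * phi v' b' = \sum_(p <- D b) phi (v * act p.1 v') (p.2 * b'))
      /\ phi 1 1 = 1 &
      (forall v b, V v -> teq2 (rho (phi v b)) [seq (phi v p.1, p.2) | p <- D b])].

Definition smash_decomposition (rho : E -> seq (E * B)) : Prop :=
  exists act : B -> E -> E, module_alg act /\ exists phi, smash_iso rho act phi.
End Smash.

Definition mult_subset (E : algType k) (V U : E -> Prop) : Prop :=
  [/\ (forall u, U u -> V u), U 1 & (forall x y, U x -> U y -> U (x * y))].

Definition comm_localization (E : algType k) (V U : E -> Prop) (Lu : comAlgType k)
    (iU : E -> Lu) : Prop :=
  [/\ (forall (a : k) x y, V x -> V y -> iU (a *: x + y) = a *: iU x + iU y),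
      (forall x y, V x -> V y -> iU (x * y) = iU x * iU y), iU 1 = 1,
      (forall u, U u -> exists w, iU u * w = 1) &
      [/\ (forall l, exists v u, [/\ V v, U u & l * iU u = iU v]) &
          (forall v, V v -> iU v = 0 <-> exists u, U u /\ u * v = 0)]].

Definition left_ore (E : algType k) (S : E -> Prop) : Prop :=
  [/\ S 1, (forall x y, S x -> S y -> S (x * y)),
      (forall s a, S s -> exists s' a', S s' /\ s' * a = a' * s) &
      (forall s a, S s -> a * s = 0 -> exists s', S s' /\ s' * a = 0)].

Definition left_fractions (E : algType k) (S : E -> Prop) (L : algType k) (iS : E -> L) : Prop :=
  [/\ (forall (a : k) x y, iS (a *: x + y) = a *: iS x + iS y),
      (forall x y, iS (x * y) = iS x * iS y), iS 1 = 1,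
      (forall s, S s -> exists w, w * iS s = 1 /\ iS s * w = 1) &
      [/\ (forall l, exists s a, [/\ S s & iS s * l = iS a]) &
          (forall a, iS a = 0 <-> exists s, S s /\ s * a = 0)]].

Section Compat.
Variables (B : algType k) (D : B -> seq (B * B)) (eps : B -> k).
Variables (E : algType k) (rho : E -> seq (E * B)).
Variables (L : algType k) (iS : E -> L).

Definition compatible_coaction (rhoS : L -> seq (L * B)) : Prop :=
  is_comod_alg D eps rhoS /\
  forall e, teq2 (rhoS (iS e)) [seq (iS p.1, p.2) | p <- rho e].

Definition rho_compatible : Prop :=
  exists rhoS, compatible_coaction rhoS /\
    forall rhoS', compatible_coaction rhoS' -> forall l, teq2 (rhoS' l) (rhoS l).
End Compat.

End Tensors.

(* Main.v *)
Require Import Defs.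
From HB Require Import structures.
From mathcomp Require Import all_boot all_order all_algebra.
From mathcomp Require Import ring.
From mathcomp Require boolp.
Set Implicit Arguments. Unset Strict Implicit. Unset Printing Implicit Defensive.
Import GRing.Theory.
Local Open Scope ring_scope.

Section Invol.
Variables (k : fieldType) (R : comAlgType k).
Record invol := Invol {
  sg :> R -> R;
  sgD : forall x y, sg (x + y) = sg x + sg y;
  sgM : forall x y, sg (x * y) = sg x * sg y;
  sg1 : sg 1 = 1;
  sgZ : forall (a : k) x, sg (a *: x) = a *: sg x;
  sgK : forall x, sg (sg x) = x }.
Record tw (s : invol) := Tw { tw1 : R; tw2 : R }.
Variable s : invol.
Lemma sg0 : s 0 = 0.
Proof. by apply: (addrI (s 0)); rewrite -sgD !addr0. Qed.
Lemma sgN x : s (- x) = - s x.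
Proof. by apply: (addrI (s x)); rewrite -sgD !subrr sg0. Qed.

Definition tw2p (u : tw s) := (tw1 u, tw2 u).
Definition p2tw (p : R * R) : tw s := Tw s p.1 p.2.
Lemma tw2pK : cancel tw2p p2tw. Proof. by case. Qed.
End Invol.
Arguments Tw {k R s}.

HB.instance Definition _ (k : fieldType) (R : comAlgType k) (s : invol R) := Equality.copy (@tw k R s) (can_type (@tw2pK k R s)).
HB.instance Definition _ (k : fieldType) (R : comAlgType k) (s : invol R) := Choice.copy (@tw k R s) (can_type (@tw2pK k R s)).

Section TwZ.
Variables (k : fieldType) (R : comAlgType k) (s : invol R).
Local Notation T := (tw s).
Definition twadd (u v : T) : T := Tw (tw1 u + tw1 v) (tw2 u + tw2 v).
Definition twopp (u : T) : T := Tw (- tw1 u) (- tw2 u).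
Definition twzero : T := Tw 0 0.
Lemma twaddA : associative twadd. Proof. by case=> ? ? [? ?] [? ?]; rewrite /twadd /= !addrA. Qed.
Lemma twaddC : commutative twadd. Proof. by case=> ? ? [? ?]; rewrite /twadd /= [X in Tw X _]addrC [X in Tw _ X]addrC. Qed.
Lemma twadd0 : left_id twzero twadd. Proof. by case=> ? ?; rewrite /twadd /= !add0r. Qed.
Lemma twaddN : left_inverse twzero twopp twadd. Proof. by case=> ? ?; rewrite /twadd /= !addNr. Qed.
End TwZ.
HB.instance Definition _ (k : fieldType) (R : comAlgType k) (s : invol R) := GRing.isZmodule.Build (@tw k R s)
  (@twaddA k R s) (@twaddC k R s) (@twadd0 k R s) (@twaddN k R s).

Section TwL.
Variables (k : fieldType) (R : comAlgType k) (s : invol R).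
Local Notation T := (tw s).
Definition twscale (a : k) (u : T) : T := Tw (a *: tw1 u) (a *: tw2 u).
Lemma twscaleA a b (v : T) : twscale a (twscale b v) = twscale (a * b) v.
Proof. by case: v => ? ?; rewrite /twscale /= !scalerA. Qed.
Lemma twscale1 : left_id 1 twscale. Proof. by case=> ? ?; rewrite /twscale /= !scale1r. Qed.
Lemma twscaleDr : right_distributive twscale +%R.
Proof. by move=> a [? ?] [? ?]; rewrite /twscale /= /twadd /= !scalerDr. Qed.
Lemma twscaleDl v : {morph twscale^~ v: a b / a + b}.
Proof. by case: v => ? ? a b; rewrite /twscale /= /twadd /= !scalerDl. Qed.
End TwL.
HB.instance Definition _ (k : fieldType) (R : comAlgType k) (s : invol R) := GRing.Zmodule_isLmodule.Build k (@tw k R s)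
  (@twscaleA k R s) (@twscale1 k R s) (@twscaleDr k R s) (@twscaleDl k R s).

Section TwRing.
Variables (k : fieldType) (R : comAlgType k) (s : invol R).
Local Notation T := (tw s).
Lemma twaddE (x y x' y' : R) : (Tw x y : T) + Tw x' y' = Tw (x + x') (y + y'). Proof. by []. Qed.
Lemma twscaleE (a : k) (x y : R) : a *: (Tw x y : T) = Tw (a *: x) (a *: y). Proof. by []. Qed.
Lemma twzeroE : (0 : T) = Tw 0 0. Proof. by []. Qed.
Lemma twoppE (x y : R) : - (Tw x y : T) = Tw (- x) (- y). Proof. by []. Qed.

Definition twmul (u v : T) : T :=
  Tw (tw1 u * tw1 v + tw2 u * s (tw2 v)) (tw1 u * tw2 v + tw2 u * s (tw1 v)).
Definition twone : T := Tw 1 0.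

Lemma twmulA : associative twmul.
Proof.
case=> a b [c d] [e f]; rewrite /twmul /=; congr Tw;
  rewrite ?sgD ?sgM ?sgK; move: (s c) (s d) (s e) (s f) => ? ? ? ?; ring.
Qed.
Lemma twmul1 : left_id twone twmul.
Proof. by case=> a b; rewrite /twmul /= !mul1r !mul0r !addr0. Qed.
Lemma twmul1r : right_id twone twmul.
Proof. by case=> a b; rewrite /twmul /= sg0 sg1 !mulr1 !mulr0 addr0 add0r. Qed.
Lemma twmulDl : left_distributive twmul +%R.
Proof. case=> a b [c d] [e f]; rewrite /twmul /twadd /=; congr Tw; simpl; ring. Qed.
Lemma twmulDr : right_distributive twmul +%R.
Proof. case=> a b [c d] [e f]; rewrite /twmul /twadd /= !sgD; congr Tw; simpl; ring. Qed.
Lemma twone_neq0 : twone != 0.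
Proof. by apply/eqP => -[] /eqP; rewrite oner_eq0. Qed.
End TwRing.

HB.instance Definition _ (k : fieldType) (R : comAlgType k) (s : invol R) := GRing.Zmodule_isNzRing.Build (@tw k R s)
  (@twmulA k R s) (@twmul1 k R s) (@twmul1r k R s) (@twmulDl k R s) (@twmulDr k R s) (@twone_neq0 k R s).

Section TwAlg.
Variables (k : fieldType) (R : comAlgType k) (s : invol R).
Local Notation T := (tw s).
Lemma twmulE (x y x' y' : R) : (Tw x y : T) * Tw x' y' = Tw (x * x' + y * s y') (x * y' + y * s x').
Proof. by []. Qed.
Lemma twoneE : (1 : T) = Tw 1 0. Proof. by []. Qed.
Lemma twscalerAl (a : k) (u v : T) : a *: (u * v) = (a *: u) * v.
Proof.
case: u v => x y [z w]; rewrite !twmulE; congr Tw; simpl;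
 by rewrite scalerDr !scalerAl.
Qed.
Lemma twscalerAr (a : k) (u v : T) : a *: (u * v) = u * (a *: v).
Proof.
case: u v => x y [z w]; rewrite !twmulE; congr Tw; simpl;
 by rewrite !sgZ scalerDr !scalerAr.
Qed.
End TwAlg.
HB.instance Definition _ (k : fieldType) (R : comAlgType k) (s : invol R) := GRing.Lmodule_isLalgebra.Build k (@tw k R s) (@twscalerAl k R s).
HB.instance Definition _ (k : fieldType) (R : comAlgType k) (s : invol R) := GRing.Lalgebra_isAlgebra.Build k (@tw k R s) (@twscalerAr k R s).

Local Notation "x %:F" := (@tofrac _ x).

Section LaurDef.
Variable k : fieldType.
Local Notation Fk := {fraction {poly k}}.
Definition laurP (x : Fk) : bool :=
  boolp.asbool (exists n : nat, exists p : {poly k}, x * ('X^n)%:F = p%:F).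
Lemma laurPP x : reflect (exists n : nat, exists p : {poly k}, x * ('X^n)%:F = p%:F) (laurP x).
Proof. exact: boolp.asboolP. Qed.
Lemma laur_closed : subring_closed laurP.
Proof.
split.
- by apply/laurPP; exists 0%N, 1; rewrite expr0 mulr1 tofrac1.
- move=> x y /laurPP[n [p Hp]] /laurPP[m [q Hq]]; apply/laurPP.
  exists (n + m)%N, (p * 'X^m - q * 'X^n).
  rewrite tofracB !tofracM -Hp -Hq exprD tofracM; ring.
- move=> x y /laurPP[n [p Hp]] /laurPP[m [q Hq]]; apply/laurPP.
  exists (n + m)%N, (p * q).
  by rewrite tofracM -Hp -Hq exprD tofracM mulrACA.
Qed.
Record laur := Laur { lval : Fk; lvalP : laurP lval }.
End LaurDef.

HB.instance Definition _ k := [isSub for @lval k].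
HB.instance Definition _ k := [Choice of laur k by <:].
HB.instance Definition _ k := GRing.SubChoice_isSubComNzRing.Build _ _ (laur k) (@laur_closed k).
Section LaurAlg.
Variable k : fieldType.
Local Notation L := (laur k).
Lemma lc_proof (a : k) : laurP ((a%:P)%:F).
Proof. by apply/laurPP; exists 0%N, a%:P; rewrite expr0 tofrac1 mulr1. Qed.
Definition lc (a : k) : L := Laur (lc_proof a).
Lemma lcM a b : lc (a * b) = lc a * lc b.
Proof. by apply: val_inj; rewrite /= polyCM tofracM. Qed.
Lemma lcD a b : lc (a + b) = lc a + lc b.
Proof. by apply: val_inj; rewrite /= polyCD tofracD. Qed.
Lemma lc1 : lc 1 = 1.
Proof. by apply: val_inj; rewrite /= tofrac1. Qed.
Definition lscale (a : k) (x : L) : L := lc a * x.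
Lemma lscaleA a b v : lscale a (lscale b v) = lscale (a * b) v.
Proof. by rewrite /lscale lcM mulrA. Qed.
Lemma lscale1 : left_id 1 lscale. Proof. by move=> x; rewrite /lscale lc1 mul1r. Qed.
Lemma lscaleDr : right_distributive lscale +%R. Proof. by move=> a x y; rewrite /lscale mulrDr. Qed.
Lemma lscaleDl v : {morph lscale^~ v: a b / a + b}. Proof. by move=> a b; rewrite /lscale lcD mulrDl. Qed.
End LaurAlg.
HB.instance Definition _ (k : fieldType) := GRing.Zmodule_isLmodule.Build k (laur k)
  (@lscaleA k) (@lscale1 k) (@lscaleDr k) (@lscaleDl k).
Lemma lscalerAl (k : fieldType) (a : k) (u v : laur k) : a *: (u * v) = (a *: u) * v.
Proof. by rewrite /GRing.scale /= /lscale mulrA. Qed.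
HB.instance Definition _ (k : fieldType) := GRing.Lmodule_isLalgebra.Build k (laur k) (@lscalerAl k).
HB.instance Definition _ (k : fieldType) := GRing.Lalgebra_isComAlgebra.Build k (laur k).

Section Bil.
Variables (k : fieldType) (V W M : lmodType k) (f : V -> W -> M).
Hypothesis hf : bilin f.
Lemma bilD1 v1 v2 w : f (v1 + v2) w = f v1 w + f v2 w.
Proof. by have := hf.1 1 v1 v2 w; rewrite !scale1r. Qed.
Lemma bil01 w : f 0 w = 0.
Proof. by apply: (addrI (f 0 w)); rewrite -bilD1 !addr0. Qed.
Lemma bilZ1 a v w : f (a *: v) w = a *: f v w.
Proof. by have := hf.1 a v 0 w; rewrite !addr0 bil01 addr0. Qed.
Lemma bilD2 v w1 w2 : f v (w1 + w2) = f v w1 + f v w2.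
Proof. by have := hf.2 1 v w1 w2; rewrite !scale1r. Qed.
Lemma bil02 v : f v 0 = 0.
Proof. by apply: (addrI (f v 0)); rewrite -bilD2 !addr0. Qed.
Lemma bilZ2 a v w : f v (a *: w) = a *: f v w.
Proof. by have := hf.2 a v w 0; rewrite !addr0 bil02 addr0. Qed.
Lemma bilN1 v w : f (- v) w = - f v w.
Proof. by rewrite -scaleN1r bilZ1 scaleN1r. Qed.
End Bil.

Definition lin (k : fieldType) (V W : lmodType k) (h : V -> W) :=
  forall (a : k) x y, h (a *: x + y) = a *: h x + h y.

Section Teq.
Variable k : fieldType.
Lemma teq2_refl (V W : lmodType k) (s : seq (V * W)) : teq2 s s.
Proof. by []. Qed.
Lemma teq2_sym (V W : lmodType k) (s t : seq (V * W)) : teq2 s t -> teq2 t s.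
Proof. by move=> H M f hf; rewrite H. Qed.
Lemma teq2_trans (V W : lmodType k) (s t u : seq (V * W)) : teq2 s t -> teq2 t u -> teq2 s u.
Proof. by move=> H1 H2 M f hf; rewrite H1 // H2. Qed.

Lemma bilin_comp (V W V' W' M : lmodType k) (h1 : V -> V') (h2 : W -> W') (f : V' -> W' -> M) :
  lin h1 -> lin h2 -> bilin f -> bilin (fun a b => f (h1 a) (h2 b)).
Proof.
move=> l1 l2 hf; split=> a x y z /=; first by rewrite l1 hf.1.
by rewrite l2 hf.2.
Qed.
Lemma teq2_map (V W V' W' : lmodType k) (h1 : V -> V') (h2 : W -> W') (s t : seq (V * W)) :
  lin h1 -> lin h2 -> teq2 s t ->
  teq2 [seq (h1 p.1, h2 p.2) | p <- s] [seq (h1 p.1, h2 p.2) | p <- t].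
Proof.
move=> l1 l2 H M f hf; rewrite !big_map /=.
exact: (H M (fun a b => f (h1 a) (h2 b)) (bilin_comp l1 l2 hf)).
Qed.
Lemma lin_id (V : lmodType k) : lin (@id V). Proof. by []. Qed.
End Teq.

Section Comod.
Variables (k : fieldType) (B : algType k) (D : B -> seq (B * B)) (eps : B -> k).
Variables (L : algType k) (rho : L -> seq (L * B)).
Hypothesis H : is_comod_alg D eps rho.

Definition pmul (s t : seq (L * B)) := [seq (p.1 * q.1, p.2 * q.2) | p <- s, q <- t].

Lemma sum_pmul (M : lmodType k) (f : L -> B -> M) s t :
  \sum_(p <- pmul s t) f p.1 p.2 = \sum_(p <- s) \sum_(q <- t) f (p.1 * q.1) (p.2 * q.2).
Proof. by rewrite /pmul big_allpairs_dep. Qed.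

Lemma pmul_teq_l s s' t : teq2 s s' -> teq2 (pmul s t) (pmul s' t).
Proof.
move=> hs M f hf; rewrite !sum_pmul.
pose g a b := \sum_(q <- t) f (a * q.1) (b * q.2).
have hg : bilin g.
  split=> a x y z; rewrite /g scaler_sumr -big_split /=; apply: eq_bigr => q _.
    by rewrite mulrDl -scalerAl hf.1.
  by rewrite mulrDl -scalerAl hf.2.
exact: (hs M g hg).
Qed.

Lemma pmul_teq_r s t t' : teq2 t t' -> teq2 (pmul s t) (pmul s t').
Proof.
move=> ht M f hf; rewrite !sum_pmul; apply: eq_bigr => p _.
pose g a b := f (p.1 * a) (p.2 * b).
have hg : bilin g.
  by split=> a x y z; rewrite /g mulrDr -scalerAr ?hf.1 ?hf.2.
exact: (ht M g hg).
Qed.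

Lemma coinv_mul x y : coinv rho x -> coinv rho y -> coinv rho (x * y).
Proof.
move=> hx hy; case: H => _ hm _ _ _.
apply: teq2_trans (hm x y) _.
apply: teq2_trans (pmul_teq_l (rho y) hx) _.
apply: teq2_trans (pmul_teq_r [:: (x, 1)] hy) _.
by rewrite /pmul /= mulr1.
Qed.

Lemma coinv1 : coinv rho 1.
Proof. by case: H. Qed.

Lemma coinv_inv x z : coinv rho x -> z * x = 1 -> x * z = 1 -> coinv rho z.
Proof.
move=> hx zx xz; case: H => _ hm h1 _ _.
have h : teq2 (pmul [:: (x, 1)] (rho z)) [:: (1, 1)].
  apply: teq2_trans _ h1; rewrite -xz.
  apply: teq2_sym; apply: teq2_trans (hm x z) _.
  exact: pmul_teq_l.
move=> M f hf.
pose g a b := f (z * a) b.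
have hg : bilin g by split=> a u v w; rewrite /g ?mulrDr -?scalerAr ?hf.1 ?hf.2.
have := h M g hg; rewrite sum_pmul !big_cons !big_nil /g /= !addr0 mulr1.
by under eq_bigr do rewrite mulrA zx mul1r mul1r; move=> ->.
Qed.
End Comod.

Section TwFacts.
Variables (k : fieldType) (R : comAlgType k) (s : invol R).
Local Notation T := (tw s).
Lemma tw1D (u v : T) : tw1 (u + v) = tw1 u + tw1 v. Proof. by []. Qed.
Lemma tw2D (u v : T) : tw2 (u + v) = tw2 u + tw2 v. Proof. by []. Qed.
Lemma tw1Z a (u : T) : tw1 (a *: u) = a *: tw1 u. Proof. by []. Qed.
Lemma tw2Z a (u : T) : tw2 (a *: u) = a *: tw2 u. Proof. by []. Qed.
Lemma tw1N (u : T) : tw1 (- u) = - tw1 u. Proof. by []. Qed.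
Lemma tw2N (u : T) : tw2 (- u) = - tw2 u. Proof. by []. Qed.
Lemma tw1M (u v : T) : tw1 (u * v) = tw1 u * tw1 v + tw2 u * s (tw2 v). Proof. by []. Qed.
Lemma tw2M (u v : T) : tw2 (u * v) = tw1 u * tw2 v + tw2 u * s (tw1 v). Proof. by []. Qed.
Lemma tw1_1 : tw1 (1 : T) = 1. Proof. by []. Qed.
Lemma tw2_1 : tw2 (1 : T) = 0. Proof. by []. Qed.
Lemma tw1_0 : tw1 (0 : T) = 0. Proof. by []. Qed.
Lemma tw2_0 : tw2 (0 : T) = 0. Proof. by []. Qed.
Lemma tw_eta (u : T) : u = Tw (tw1 u) (tw2 u). Proof. by case: u. Qed.
Lemma tw_ext (u v : T) : tw1 u = tw1 v -> tw2 u = tw2 v -> u = v.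
Proof. by case: u v => ? ? [? ?] /= -> ->. Qed.
End TwFacts.
Definition twE := (tw1D, tw2D, tw1Z, tw2Z, tw1N, tw2N, tw1M, tw2M, tw1_1, tw2_1, tw1_0, tw2_0).

Lemma AC8 (M : zmodType) (a1 a2 a3 a4 a5 a6 a7 a8 : M) :
  a1 + a2 + a3 + a4 + (a5 + a6 + a7 + a8) = a1 + a5 + (a2 + a6) + (a3 + a7) + (a4 + a8).
Proof.
rewrite -!addrA; congr (a1 + _).
rewrite [in LHS](addrCA a4 a5) (addrCA a3 a5) (addrCA a2 a5); congr (a5 + (a2 + _)).
rewrite [in LHS](addrCA a4 a6) (addrCA a3 a6); congr (a6 + (a3 + _)).
by rewrite addrCA.
Qed.

Section Tri.
Variables (k : fieldType) (U V W M : lmodType k) (f : U -> V -> W -> M).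
Hypothesis hf : trilin f.
Lemma tri01 v w : f 0 v w = 0.
Proof.
case: hf => h _ _; have := h 1 0 0 v w; rewrite !scale1r addr0 => e.
by apply/esym/(addrI (f 0 v w)); rewrite addr0.
Qed.
Lemma tri02 u w : f u 0 w = 0.
Proof.
case: hf => _ h _; have := h 1 u 0 0 w; rewrite !scale1r addr0 => e.
by apply/esym/(addrI (f u 0 w)); rewrite addr0.
Qed.
End Tri.

Section Hopf.
Variable k : fieldType.
Definition idinv : invol (k^o) :=
  @Invol k (k^o) id (fun _ _ => erefl) (fun _ _ => erefl) erefl (fun _ _ => erefl) (fun _ => erefl).
Definition Bt := tw idinv.
Definition b1 : Bt := @Tw k (k^o) idinv (1 : k) (0 : k).
Definition bg : Bt := @Tw k (k^o) idinv (0 : k) (1 : k).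
Definition eps (b : Bt) : k := tw1 b + tw2 b.

Section Gen.
Variables (R : comAlgType k) (s : invol R).
Local Notation T := (tw s).
Definition rhoT (u : T) : seq (T * Bt) := [:: (Tw (tw1 u) 0, b1); (Tw 0 (tw2 u), bg)].
Definition c1 (l : seq (T * Bt)) := \sum_(p <- l) (tw1 p.2 : k) *: tw1 p.1.
Definition c2 (l : seq (T * Bt)) := \sum_(p <- l) (tw1 p.2 : k) *: tw2 p.1.
Definition c3 (l : seq (T * Bt)) := \sum_(p <- l) (tw2 p.2 : k) *: tw1 p.1.
Definition c4 (l : seq (T * Bt)) := \sum_(p <- l) (tw2 p.2 : k) *: tw2 p.1.

Ltac csimp := rewrite /c1 /c2 /c3 /c4 ?big_cons ?big_nil /= ?mulr1 ?mulr0 ?mul1r ?mul0r ?addr0 ?add0r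
  ?sg0 ?sg1 ?scale1r ?scale0r ?scaler0 ?addr0 ?add0r ?mulr0 ?mul0r.

Section Norm.
Variables (M : lmodType k) (f : T -> Bt -> M).
Hypothesis hf : bilin f.
Lemma fD1 x y b : f (Tw (x + y) 0) b = f (Tw x 0) b + f (Tw y 0) b.
Proof. by rewrite -(bilD1 hf); congr f; apply: tw_ext; rewrite /= ?addr0. Qed.
Lemma fD2 x y b : f (Tw 0 (x + y)) b = f (Tw 0 x) b + f (Tw 0 y) b.
Proof. by rewrite -(bilD1 hf); congr f; apply: tw_ext; rewrite /= ?addr0. Qed.
Lemma f00 b : f (Tw 0 0) b = 0.
Proof. by have := bil01 hf b. Qed.
Lemma f_single u b : f u b = f (Tw ((tw1 b : k) *: tw1 u) 0) b1 + f (Tw 0 ((tw1 b : k) *: tw2 u)) b1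
   + f (Tw ((tw2 b : k) *: tw1 u) 0) bg + f (Tw 0 ((tw2 b : k) *: tw2 u)) bg.
Proof.
have eu : u = Tw (tw1 u) 0 + Tw 0 (tw2 u) by apply: tw_ext; rewrite /= ?addr0 ?add0r.
have eb : b = (tw1 b : k) *: b1 + (tw2 b : k) *: bg.
  by apply: tw_ext; rewrite /= /GRing.scale /= ?mulr1 ?mulr0 ?addr0 ?add0r.
have sc : forall (a : k) x, Tw (a *: x) 0 = a *: (Tw x 0 : T).
  by move=> a x; apply: tw_ext; rewrite /= ?scaler0.
have sc2 : forall (a : k) x, Tw 0 (a *: x) = a *: (Tw 0 x : T).
  by move=> a x; apply: tw_ext; rewrite /= ?scaler0.
rewrite !sc !sc2 !(bilZ1 hf) {1}eb {1}eu (bilD1 hf) !(bilD2 hf) !(bilZ2 hf).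
by rewrite -!addrA; congr (_ + _); rewrite addrCA.
Qed.
Lemma sum_norm l : \sum_(p <- l) f p.1 p.2 =
  f (Tw (c1 l) 0) b1 + f (Tw 0 (c2 l)) b1 + f (Tw (c3 l) 0) bg + f (Tw 0 (c4 l)) bg.
Proof.
elim: l => [|p l IH].
  by rewrite /c1 /c2 /c3 /c4 !big_nil !f00 !addr0.
rewrite big_cons IH /c1 /c2 /c3 /c4 !big_cons !fD1 !fD2 (f_single p.1 p.2).
set a1 := f _ b1; set a2 := f _ b1; set a3 := f _ bg; set a4 := f _ bg.
set a5 := f _ b1; set a6 := f _ b1; set a7 := f _ bg; set a8 := f _ bg.
by rewrite (AC8 a1).
Qed.
End Norm.
Lemma teq2_norm l l' : c1 l = c1 l' -> c2 l = c2 l' -> c3 l = c3 l' -> c4 l = c4 l' -> teq2 l l'.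
Proof. by move=> e1 e2 e3 e4 M f hf; rewrite !(sum_norm hf) e1 e2 e3 e4. Qed.
Lemma rhoT_lin a x y : teq2 (rhoT (a *: x + y)) (tscale a (rhoT x) ++ rhoT y).
Proof. by apply: teq2_norm; csimp. Qed.
Lemma rhoT_mul x y : teq2 (rhoT (x * y))
   [seq (p.1 * q.1, p.2 * q.2) | p <- rhoT x, q <- rhoT y].
Proof. by apply: teq2_norm; csimp. Qed.
Lemma rhoT_one : teq2 (rhoT 1) [:: (1, 1)].
Proof. by apply: teq2_norm; csimp. Qed.
Lemma rhoT_counit e : \sum_(p <- rhoT e) eps p.2 *: p.1 = e.
Proof. by rewrite !big_cons big_nil; apply: tw_ext; csimp; rewrite /eps /= ?addr0 ?add0r scale1r. Qed.
End Gen.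
Ltac csimp := rewrite /c1 /c2 /c3 /c4 ?big_cons ?big_nil /= ?mulr1 ?mulr0 ?mul1r ?mul0r ?addr0 ?add0r
  ?sg0 ?sg1 ?scale1r ?scale0r ?scaler0 ?addr0 ?add0r ?mulr0 ?mul0r.

Lemma rhoT_coassoc (R : comAlgType k) (s : invol R) (e : tw s) : teq3 [seq (q.1, q.2, p.2) | p <- rhoT e, q <- rhoT p.1]
                      [seq (p.1, q.1, q.2) | p <- rhoT e, q <- rhoT p.2].
Proof.
move=> M f hf; rewrite !big_cons !big_nil /=.
have z1 : forall v w, f (Tw 0 0) v w = 0 by move=> v w; exact: (tri01 hf).
have z2 : forall u w, f u (Tw 0 0) w = 0 by move=> u w; exact: (tri02 hf).
by rewrite !z1 !z2 !addr0 !add0r.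
Qed.

Lemma comod_rhoT (R : comAlgType k) (s : invol R) :
  is_comod_alg (@rhoT _ idinv) eps (@rhoT _ s).
Proof.
split; [exact: rhoT_lin | exact: rhoT_mul | exact: rhoT_one | exact: rhoT_coassoc | exact: rhoT_counit].
Qed.

Lemma hopf_Bt : is_hopf (@rhoT _ idinv) eps id.
Proof.
split.
- split; [exact: rhoT_lin | exact: rhoT_mul | exact: rhoT_one].
- exact: rhoT_coassoc.
- split.
  + by move=> a [x y] [z w]; rewrite /eps !twE /= /GRing.scale /=; ring.
  + by move=> [x y] [z w]; rewrite /eps !twE /=; ring.
  + by rewrite /eps /= addr0.
- move=> x; split; last exact: rhoT_counit.
  by rewrite !big_cons big_nil; apply: tw_ext; csimp; rewrite /eps /= ?addr0 ?add0r /GRing.scale /= mulr1.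
- split=> // x; rewrite !big_cons !big_nil; split; apply: tw_ext; rewrite /eps /= /GRing.scale /=; ring.
Qed.


Lemma coinvT (R : comAlgType k) (s : invol R) (e : tw s) : coinv (@rhoT _ s) e <-> tw2 e = 0.
Proof.
split=> [H|H]; last first.
  by apply: teq2_norm; csimp; rewrite ?H.
pose f (u : tw s) (b : Bt) : tw s := (tw2 b : k) *: u.
have hf : bilin f.
  split=> a u v w; rewrite /f.
    by rewrite scalerDr !scalerA mulrC.
  by rewrite /= scalerDl -scalerA.
have := H _ f hf; rewrite !big_cons !big_nil /f /= !scale0r !add0r scale1r addr0.
by move/(congr1 (@tw2 _ _ _)).
Qed.


Section Smash.
Variables (R : comAlgType k) (s : invol R).
Local Notation T := (tw s).
Lemma kscaleE (a : k) (x : k^o) : a *: x = a * x. Proof. by []. Qed.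
Definition inA (a : k) : R := a%:A.
Lemma sE (a : k) (x : R) : a *: x = inA a * x. Proof. by rewrite /inA mulr_algl. Qed.
Lemma inAD (a b : k) : inA (a + b) = inA a + inA b. Proof. exact: scalerDl. Qed.
Lemma inAM (a b : k) : inA (a * b) = inA a * inA b. Proof. by rewrite /inA mulr_algl scalerA. Qed.
Lemma inA1 : inA 1 = 1. Proof. exact: scale1r. Qed.
Lemma inA0 : inA 0 = 0. Proof. exact: scale0r. Qed.
Lemma sgA (a : k) : s (inA a) = inA a. Proof. by rewrite /inA sgZ sg1. Qed.
Ltac alg0 := rewrite /= ?kscaleE ?sE ?inAD ?inAM ?inA1 ?inA0
   ?(sgD s) ?(sgM s) ?sgA ?(sg0 s) ?(sg1 s) ?(sgK s) ?mulr0 ?mul0r ?addr0 ?add0r ?mul1r ?mulr1.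
Ltac alg := alg0; alg0.

Definition act (b : Bt) (v : T) : T := Tw ((tw1 b : k) *: tw1 v + (tw2 b : k) *: s (tw1 v)) 0.
Definition jB (b : Bt) : T := Tw ((tw1 b : k) *: 1) ((tw2 b : k) *: 1).
Definition phi (v : T) (b : Bt) : T := v * jB b.

Local Notation V := (coinv (@rhoT _ s)).

Lemma module_act : module_alg (@rhoT _ idinv) eps V act.
Proof.
split.
- by move=> b v _; apply/coinvT.
- by move=> a b1 b2 v _; apply: tw_ext; rewrite /act; alg; ring.
- by move=> a b v1 v2 _ _; apply: tw_ext; rewrite /act; alg; ring.
- by move=> b c v _; apply: tw_ext; rewrite /act; alg; ring.
split.
- by move=> v /coinvT hv; apply: tw_ext; rewrite /act; alg; rewrite ?hv ?mul1r.
- move=> b v w /coinvT hv /coinvT hw; rewrite !big_cons big_nil addr0.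
  by apply: tw_ext; rewrite /act; alg; rewrite ?hv ?hw; alg; ring.
- by move=> b; apply: tw_ext; rewrite /act /eps; alg; ring.
Qed.

Lemma phi_sum (l : seq (T * Bt)) : (forall p, p \in l -> V p.1) ->
  \sum_(p <- l) phi p.1 p.2 = Tw (c1 l) (c3 l) /\ c2 l = 0 /\ c4 l = 0.
Proof.
elim: l => [|p l IH] hl.
  by rewrite /c1 /c2 /c3 /c4 !big_nil.
have /coinvT hp := hl p (mem_head _ _).
have hl2 : forall q, q \in l -> V q.1 by move=> q hq; apply: hl; rewrite inE hq orbT.
have [e1 [e2 e3]] := IH hl2.
rewrite big_cons e1 /c1 /c2 /c3 /c4 !big_cons -/(c1 l) -/(c2 l) -/(c3 l) -/(c4 l) e2 e3 hp.
split; last by rewrite !scaler0 !addr0.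
by apply: tw_ext; rewrite /phi /jB; alg; rewrite ?hp; alg; ring.
Qed.

Lemma smash_phi : smash_iso (@rhoT _ idinv) V (@rhoT _ s) act phi.
Proof.
split.
- split.
  + by move=> a v1 v2 b _ _; apply: tw_ext; rewrite /phi /jB; alg; ring.
  + by move=> a v b1 b2 _; apply: tw_ext; rewrite /phi /jB; alg; ring.
- move=> e; exists [:: (Tw (tw1 e) 0, b1); (Tw (tw2 e) 0, bg)]; split.
    by move=> p; rewrite !inE => /orP[] /eqP -> /=; apply/coinvT.
  by rewrite !big_cons big_nil; apply: tw_ext; rewrite /phi /jB; alg; ring.
- move=> l t hl ht E.
  have [e1 [e2 e3]] := phi_sum hl; have [f1 [f2 f3]] := phi_sum ht.
  rewrite e1 f1 in E; case: E => E1 E3.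
  by apply: teq2_norm; rewrite ?E1 ?E3 ?e2 ?e3 ?f2 ?f3.
- split.
  + move=> v b v' b' /coinvT hv /coinvT hv'; rewrite !big_cons big_nil addr0.
    by apply: tw_ext; rewrite /phi /jB /act; alg; rewrite ?hv ?hv'; alg; ring.
  + by apply: tw_ext; rewrite /phi /jB; alg.
- move=> v b /coinvT hv; apply: teq2_norm; csimp; rewrite /phi /jB; alg; rewrite ?hv; alg; ring.
Qed.
End Smash.
End Hopf.

Section Concrete.
Variable k : fieldType.
Local Notation "x %:F" := (@tofrac _ x).
Definition sgpf (p : {poly k}) := p \Po (1 - 'X).
Lemma sgpK p : sgpf (sgpf p) = p.
Proof.
rewrite /sgpf -comp_polyA comp_polyB comp_polyX -polyC1 comp_polyC polyC1.
by rewrite opprB addrC subrK comp_polyXr.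
Qed.
Lemma sgp1 : sgpf 1 = 1. Proof. by rewrite /sgpf -polyC1 comp_polyC. Qed.
Definition sgp : invol {poly k} :=
  @Invol k {poly k} sgpf (fun p q => comp_polyD p q _) (fun p q => comp_polyM p q _)
    sgp1 (fun a p => comp_polyZ a p _) sgpK.
Definition E := tw sgp.
Lemma sgpX : sgp 'X = 1 - 'X. Proof. exact: comp_polyX. Qed.
Lemma sgp1X : sgp (1 - 'X) = 'X. Proof. by rewrite -sgpX (sgK sgp). Qed.

Lemma lvalD (x y : laur k) : lval (x + y) = lval x + lval y. Proof. by []. Qed.
Lemma lvalM (x y : laur k) : lval (x * y) = lval x * lval y. Proof. by []. Qed.
Lemma lval1 : lval (1 : laur k) = 1. Proof. by []. Qed.
Lemma lval0 : lval (0 : laur k) = 0. Proof. by []. Qed.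
Lemma lvalZ a (x : laur k) : lval (a *: x) = (a%:P)%:F * lval x. Proof. by []. Qed.

Lemma lemb_proof (p : {poly k}) : laurP (p%:F).
Proof. by apply/laurPP; exists 0%N, p; rewrite expr0 tofrac1 mulr1. Qed.
Definition lemb (p : {poly k}) : laur k := Laur (lemb_proof p).
Definition iU (e : E) : laur k := lemb (tw1 e).

Local Notation rhoE := (@rhoT k _ sgp).
Local Notation VE := (coinv rhoE).

Lemma comm_E : commutative_on VE.
Proof.
move=> x y /coinvT hx /coinvT hy; apply: tw_ext; rewrite /= hx hy.
  by rewrite !mul0r !addr0 mulrC.
by rewrite !mul0r !mulr0 !addr0.
Qed.

Lemma poly_iso_E : poly_iso VE.
Proof.
exists (fun p => Tw p 0 : E); split.
- by move=> a p q; apply: tw_ext; rewrite /= ?scaler0 ?addr0.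
- by move=> p q; apply: tw_ext; rewrite /= ?mulr0 ?mul0r ?addr0.
- by [].
- by move=> p q [].
- move=> e; split.
    by move/coinvT => h; exists (tw1 e); apply: tw_ext.
  by case=> p ->; apply/coinvT.
Qed.

Definition Uset (e : E) : Prop := exists n : nat, e = Tw ('X^n) 0.

Lemma mult_U : mult_subset VE Uset.
Proof.
split.
- by move=> u [n ->]; apply/coinvT.
- by exists 0%N; rewrite expr0.
- move=> x y [n ->] [m ->]; exists (n + m)%N; apply: tw_ext; rewrite /=.
    by rewrite mul0r addr0 exprD.
  by rewrite mulr0 mul0r addr0.
Qed.

Lemma Xn_neq0 n : (('X^n : {poly k})%:F) != 0.
Proof. by rewrite tofrac_eq0 expf_neq0 // polyX_eq0. Qed.

Lemma loc_U : comm_localization VE Uset iU.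
Proof.
split.
- move=> a x y _ _; apply: val_inj; rewrite /=.
  by rewrite -mul_polyC tofracD tofracM.
- move=> x y /coinvT hx /coinvT hy; apply: val_inj; rewrite /= hx hy.
  by rewrite mul0r addr0 tofracM.
- by apply: val_inj; rewrite /= tofrac1.
- move=> u [n ->].
  have P : laurP (((('X^n : {poly k})%:F)^-1)).
    by apply/laurPP; exists n, 1; rewrite mulVf ?Xn_neq0 // tofrac1.
  exists (Laur P); apply: val_inj; rewrite /= mulfV //; exact: Xn_neq0.
split.
- move=> l; have /laurPP [n [p hp]] := lvalP l.
  exists (Tw p 0 : E), (Tw ('X^n) 0 : E); split.
  + by apply/coinvT.
  + by exists n.
  + by apply: val_inj; rewrite /=.
- move=> v /coinvT hv; split.
  + move=> h; exists 1; split; first by exists 0%N; rewrite expr0.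
    have : lval (iU v) = 0 by rewrite h.
    rewrite /= => /eqP; rewrite tofrac_eq0 => /eqP h1.
    by apply: tw_ext; rewrite /= h1 hv !mul0r !mulr0 !addr0.
  + case=> u [[n ->]] /(congr1 (@tw1 _ _ _)) /= /eqP.
    rewrite hv mul0r addr0 mulf_eq0 expf_eq0 polyX_eq0 andbF /= => /eqP h1.
    by apply: val_inj; rewrite /= h1 tofrac0.
Qed.
End Concrete.

Section Neg.
Variable k : fieldType.
Local Notation rhoE := (@rhoT k _ (sgp k)).
Local Notation VE := (coinv rhoE).
Local Notation D := (@rhoT k _ (idinv k)).
Lemma sgpf0 : sgpf 0 = 0 :> {poly k}. Proof. exact: (sg0 (sgp k)). Qed.
Lemma sgpfX : sgpf 'X = 1 - 'X :> {poly k}. Proof. exact: comp_polyX. Qed.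
Lemma sgpf1X : sgpf (1 - 'X) = 'X :> {poly k}. Proof. by rewrite -sgpfX sgpK. Qed.
Definition Xe : E k := Tw 'X 0.
Definition Ye : E k := Tw (1 - 'X) 0.
Definition Ge : E k := Tw 0 1.
Lemma GG : Ge * Ge = 1.
Proof. by apply: tw_ext; rewrite /= ?sgpf0 ?sgp1 ?mul0r ?mulr0 ?mul1r ?add0r ?addr0. Qed.
Lemma GY : Ge * Ye = Xe * Ge.
Proof.
by apply: tw_ext; rewrite /= ?sgpf0 ?sgp1 ?sgpfX ?sgpf1X ?mul0r ?mulr0 ?mul1r ?mulr1 ?add0r ?addr0.
Qed.
Lemma YG : Ye * Ge = Ge * Xe.
Proof.
by apply: tw_ext; rewrite /= ?sgpf0 ?sgp1 ?sgpfX ?sgpf1X ?mul0r ?mulr0 ?mul1r ?mulr1 ?add0r ?addr0.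
Qed.

Lemma neg_part : ~ exists (S' : E k -> Prop) (L : algType k) (iS : E k -> L)
    (rhoS : L -> seq (L * Bt k)) (zeta : L -> laur k),
  [/\ left_ore S', left_fractions S' iS, rho_compatible D (@eps k) rhoE iS,
      compatible_coaction D (@eps k) rhoE iS rhoS &
      alg_iso_on (coinv rhoS) zeta /\ (forall v, VE v -> zeta (iS v) = iU v)].
Proof.
case=> S' [L [iS [rhoS [zeta [_ hfr _ [hcom hcomp] [[zl zm z1 zi zs] hzi]]]]]].
case: hfr => iSl iSm iS1 _ _.
have cS : forall e, VE e -> coinv rhoS (iS e).
  move=> e he; apply: teq2_trans (hcomp e) _.
  exact: (teq2_map (h1:=iS) (h2:=id) iSl (@lin_id _ _) he).
have hX : VE Xe by apply/coinvT.
have hY : VE Ye by apply/coinvT.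
have [_ lm _ linv [lsurj lker]] := loc_U k.
have [w hw] := linv Xe (ex_intro _ 1%N (congr2 Tw (esym (expr1 _)) erefl)).
have [y [hy zy]] := zs w.
have cX := cS _ hX.
have hyX : coinv rhoS (y * iS Xe) by apply: (coinv_mul hcom).
have hXy : coinv rhoS (iS Xe * y) by apply: (coinv_mul hcom).
have yX : y * iS Xe = 1.
  apply: zi => //; first exact: (coinv1 hcom).
  by rewrite zm // zy hzi // mulrC hw z1.
have Xy : iS Xe * y = 1.
  apply: zi => //; first exact: (coinv1 hcom).
  by rewrite zm // zy hzi // hw z1.
pose z := iS Ge * y * iS Ge.
have zY : z * iS Ye = 1.
  by rewrite /z -mulrA -iSm GY iSm mulrA -(mulrA (iS Ge)) yX mulr1 -iSm GG iS1.
have Yz : iS Ye * z = 1.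
  by rewrite /z !mulrA -iSm YG iSm -(mulrA (iS Ge)) Xy mulr1 -iSm GG iS1.
have hz : coinv rhoS z := coinv_inv hcom (cS _ hY) zY Yz.
have inv : zeta z * iU Ye = 1 by rewrite -hzi // -zm ?zY ?z1 //; exact: cS.
have [v [u [hv [n eu] e1]]] := lsurj (zeta z).
have hYv : VE (Ye * v) by move/coinvT: hv => hv'; apply/coinvT; rewrite /= hv' !mulr0 !mul0r addr0.
have hu : VE u by rewrite eu; apply/coinvT.
have e2 : iU u = iU (Ye * v).
  by rewrite lm // -e1 mulrA [iU Ye * _]mulrC inv mul1r.
have hw3 : VE ((-1) *: u + Ye * v).
  by move/coinvT: hYv => h1; apply/coinvT; rewrite tw2D tw2Z h1 eu /= scaler0 addr0.
have e3 : iU ((-1) *: u + Ye * v) = 0.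
  have [ll _ _ _ _] := loc_U k.
  by rewrite ll // scaleN1r e2 addNr.
have [u' [[m eu'] e4]] := (lker _ hw3).1 e3.
move/coinvT: hv => hv'.
move: e4; rewrite eu' eu => /(congr1 (@tw1 _ _ _)) /=.
rewrite hv' !mul0r !addr0 => /(congr1 (fun p : {poly k} => p.[1])).
rewrite !hornerE !expr1n subrr mul0r addr0 mul1r mulr1 => /eqP.
by rewrite oppr_eq0 oner_eq0.
Qed.
End Neg.

Theorem theorem5 (k : fieldType) :
  exists (B : algType k) (D : B -> seq (B * B)) (eps : B -> k) (S : B -> B),
    is_hopf D eps S /\
    exists (E : algType k) (rho : E -> seq (E * B)),
      [/\ is_comod_alg D eps rho,
          commutative_on (coinv rho) /\ poly_iso (coinv rho),
          smash_decomposition D eps (coinv rho) rho &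
          exists U : E -> Prop, mult_subset (coinv rho) U /\
            exists (Lu : comAlgType k) (iU : E -> Lu),
              comm_localization (coinv rho) U iU /\
              ~ exists (S' : E -> Prop) (L : algType k) (iS : E -> L)
                       (rhoS : L -> seq (L * B)) (zeta : L -> Lu),
                  [/\ left_ore S', left_fractions S' iS,
                      rho_compatible D eps rho iS,
                      compatible_coaction D eps rho iS rhoS &
                      alg_iso_on (coinv rhoS) zeta /\
                      (forall v, coinv rho v -> zeta (iS v) = iU v)]].
Proof.
exists (Bt k), (@rhoT k _ (idinv k)), (@eps k), id; split; first exact: hopf_Bt.
exists (E k), (@rhoT k _ (sgp k)); split.
- exact: comod_rhoT.
- split; [exact: comm_E | exact: poly_iso_E].
- exists (@act k _ (sgp k)); split; first exact: module_act.
  exists (@phi k _ (sgp k)); exact: smash_phi.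
- exists (@Uset k); split; first exact: mult_U.
  exists (laur k), (@iU k); split; first exact: loc_U.
  exact: neg_part.
Qed.
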